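(* Let $C>1$, $\alpha\in(0,1/4)$, $\gamma>C(20\alpha)^{1/5}$ and $r>5/\gamma$. Suppose $H$ is sampled from a $Cr/n$-spread distribution on subgraphs of $K_{n,n}$. Then, with probability at least $1-n^{-14}$, every $V\subset V(K_{n,n})$ with $|V|<2\alpha n$ satisfies $|E(H[V])|\le \gamma r|V|$ (i.e. $H$ is $(\alpha,\gamma r/n)$-sparse).
   Context: A random subgraph $H$ of $K_{n,n}$ is $q$-spread if $\mathbb{P}(S\subset H)\le q^{|S|}$ for every $S\subset E(K_{n,n})$. $H[V]$ denotes the subgraph of $H$ induced by $V$. *)

(* Defs.v *)
From HB Require Import structures.
From mathcomp Require Import all_boot all_order all_algebra.
From mathcomp Require Import all_classical all_reals.
From mathcomp Require Import exp.
Set Implicit Arguments. Unset Strict Implicit. Unset Printing Implicit Defensive.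
Import Order.TTheory GRing.Theory Num.Theory.
Local Open Scope ring_scope.

(* K_{n,n}: left vertices 'I_n (inl), right vertices 'I_n (inr);
   the edge (i,j) joins left vertex i and right vertex j. *)
Definition vtx (n : nat) : finType := ('I_n + 'I_n)%type.
Definition edge (n : nat) : finType := ('I_n * 'I_n)%type.

(* A random subgraph H of K_{n,n} (spanning, given by its edge set)
   is a probability distribution on {set edge n}. *)
Definition is_distr (R : realType) (n : nat) (mu : {ffun {set edge n} -> R}) :=
  (forall H, 0 <= mu H) /\ \sum_(H : {set edge n}) mu H = 1.

Definition prob (R : realType) (n : nat) (mu : {ffun {set edge n} -> R})
  (P : pred {set edge n}) : R := \sum_(H : {set edge n} | P H) mu H.

Definition spread (R : realType) (n : nat) (q : R) (mu : {ffun {set edge n} -> R}) :=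
  forall S : {set edge n}, prob mu (fun H => S \subset H) <= q ^+ #|S|.

Definition induced (n : nat) (H : {set edge n}) (V : {set vtx n}) : {set edge n} :=
  [set e in H | (inl e.1 \in V) && (inr e.2 \in V)].

Definition sparse (R : realType) (n : nat) (alpha p : R) (H : {set edge n}) : Prop :=
  forall V : {set vtx n}, (#|V|%:R < 2 * alpha * n%:R) ->
    (#|induced H V|%:R <= p * n%:R * #|V|%:R).

(* Main.v *)
Require Import Defs.
From HB Require Import structures.
From mathcomp Require Import all_boot all_order all_algebra.
From mathcomp Require Import all_classical all_reals.
From mathcomp Require Import exp.
From mathcomp Require Import sequences ring lra zify.
Import Order.TTheory GRing.Theory Num.Theory.
Local Open Scope ring_scope.

Lemma ffact_le_exp n m : (n ^_ m <= n ^ m)%N.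
Proof.
elim: m n => [|m IH] n //; rewrite ffactnS expnS leq_mul //.
apply: leq_trans (IH _) _; case: m {IH} => [|m]; first by rewrite !expn0.
by rewrite leq_exp2r // leq_pred.
Qed.

Lemma fact_bound (R : realType) k :
  (k%:R)^+k <= expR 1 ^+ k * (k`!)%:R :> R.
Proof.
case: k => [|j]; first by rewrite !expr0 mul1r.
have := @expR_ge1Dxn R j.+1%:R j (ler0n _ _).
rewrite -[X in expR X]mulr1 expRM_natl => h.
have f0 : (0 : R) < j.+1`!%:R by rewrite ltr0n fact_gt0.
rewrite -ler_pdivrMr //; apply: le_trans h; rewrite lerDr //.
Qed.

Lemma e_le3 (R : realType) : expR 1 <= 3 :> R.
Proof.
have h1 : (7/8 : R) <= expR (- (1/8)) by have := @expR_ge1Dx R (- (1/8)); lra.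
have h2 : expR (1/8) <= 8/7 :> R.
  have -> : expR (1/8) = (expR (- (1/8)))^-1 :> R by rewrite expRN invrK.
  rewrite -[8/7 : R]invf_div lef_pV2 ?posrE ?expR_gt0 //; lra.
have -> : (1 : R) = 8%:R * (1/8) by field.
rewrite expRM_natl; apply: (@le_trans _ _ ((8/7 : R) ^+ 8)); last by lra.
by apply: lerXn2r; rewrite ?nnegrE ?expR_ge0 //; lra.
Qed.

Lemma binom_bound (R : realType) (m k : nat) : (0 < k)%N ->
  'C(m, k)%:R <= (expR 1 * m%:R / k%:R) ^+ k :> R.
Proof.
move=> k0.
have f0 : (0 : R) < k`!%:R by rewrite ltr0n fact_gt0.
have hk : (0 : R) < k%:R ^+ k by rewrite exprn_gt0 // ltr0n.
have hb : ('C(m, k) * k`! <= m ^ k)%N by rewrite bin_ffact ffact_le_exp.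
have hb' : 'C(m, k)%:R * k`!%:R <= (m%:R ^+ k : R) by rewrite -natrM -natrX ler_nat.
rewrite !exprMn exprVn ler_pdivlMr //.
apply: (@le_trans _ _ ('C(m, k)%:R * (expR 1 ^+ k * k`!%:R))).
  by rewrite ler_wpM2l // fact_bound.
by rewrite mulrCA ler_wpM2l ?exprn_ge0 ?expR_ge0.
Qed.

Lemma poly_exp (R : realType) v : (21 <= v)%N -> 3 * ((2 * v)%:R) ^+ 15 <= (40 : R) ^+ v.
Proof.
move=> /subnKC <-; elim: (v - 21)%N => [|i IH]; first by rewrite /=; lra.
rewrite addnS [(40 : R) ^+ _.+1]exprS.
apply: (le_trans (y := 40 * (3 * (2 * (21 + i))%:R ^+ 15))); last by rewrite ler_wpM2l.
set w := (21 + i)%N.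
have w21 : (21 : R) <= w%:R by rewrite ler_nat leq_addr.
have : (2 * w.+1)%:R <= (5/4) * (2 * w)%:R :> R.
  rewrite !natrM -[w.+1]addn1 natrD; lra.
move=> /(lerXn2r 15); rewrite !nnegrE ler0n => /(_ isT) h.
have h0 : (0 : R) <= 5 / 4 * (2 * w)%:R by lra.
have h' := h h0; rewrite exprMn in h'.
have hp : (0 : R) <= (2 * w)%:R ^+ 15 by rewrite exprn_ge0.
have c : ((5 : R) / 4) ^+ 15 <= 40 by lra.
nra.
Qed.
Lemma card_split n (V : {set vtx n}) :
  #|V| = (#|[set i | inl i \in V]| + #|[set j | inr j \in V]|)%N.
Proof.
rewrite -!sum1_card /= (big_sumType _ (fun x => x \in V)) /=.
by congr (_ + _)%N; apply: eq_bigl => x; rewrite inE.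
Qed.

Lemma card_EV n (V : {set vtx n}) :
  (4 * #|induced [set: edge n] V| <= #|V| ^ 2)%N.
Proof.
have -> : induced [set: edge n] V = finset.setX [set i | inl i \in V] [set j | inr j \in V].
  by apply/setP => -[i j]; rewrite !inE.
rewrite cardsX card_split.
exact: (nat_AGM2 _ _).1.
Qed.

Lemma exists_sub (T : finType) (A : {set T}) k : (k <= #|A|)%N ->
  exists S : {set T}, S \subset A /\ #|S| = k.
Proof.
rewrite -bin_gt0 -cards_draws card_gt0 => /set0Pn [S]; rewrite inE => /andP [h1 /eqP h2].
by exists S.
Qed.
Lemma perV (R : realType) (q b beta : R) (m k v : nat) :
  0 <= q -> (4 * m <= v ^ 2)%N -> 5 < beta -> beta * v%:R < k%:R ->
  ((20 < v)%N -> expR 1 * m%:R * q / k%:R <= b) -> ((20 < v)%N -> b <= 1) ->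
  'C(m, k)%:R * q ^+ k <= (if (20 < v)%N then b ^+ (5 * v) else 0).
Proof.
move=> q0 hm b5 hk hb b1.
have k5 : (5 * v < k)%N.
  rewrite -(ltr_nat R) natrM; apply: le_lt_trans hk.
  by rewrite ler_wpM2r // ltW.
have k0 : (0 < k)%N by apply: leq_ltn_trans k5.
have e0 : 0 <= expR 1 * m%:R * q / k%:R :> R.
  by rewrite !mulr_ge0 ?expR_ge0 ?invr_ge0.
case: ifP => hv; last first.
  rewrite bin_small ?mul0r //.
  have : (v <= 20)%N by rewrite leqNgt hv.
  move=> hv2; nia.
move: (hb hv) (b1 hv) => {}hb {}b1.
apply: (le_trans (y := (expR 1 * m%:R / k%:R) ^+ k * q ^+ k)).
  by rewrite ler_wpM2r ?exprn_ge0 ?binom_bound.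
rewrite -exprMn mulrAC.
apply: (le_trans (y := b ^+ k)).
  by apply: lerXn2r; rewrite ?nnegrE // (le_trans e0 hb).
apply: ler_wiXn2l => //; [exact: (le_trans e0 hb) | exact: ltnW].
Qed.
Lemma num1 (R : realType) (c u w : R) : 0 <= c -> c <= 3 -> 0 < u -> u <= 1/2 ->
  0 < w -> 10 * u <= w ^+ 5 ->
  (c * u / (4 * w)) ^+ 5 <= 1 /\ (2 * c / u) * (c * u / (4 * w)) ^+ 5 <= u ^+ 3 / 5.
Proof.
move=> c0 c3 u0 u2 w0 hw.
have W0 : 0 < w ^+ 5 by rewrite exprn_gt0.
have wn : w != 0 by rewrite gt_eqF.
have un : u != 0 by rewrite gt_eqF.
have e1 : (c * u / (4 * w)) ^+ 5 = c ^+ 5 * u ^+ 5 / (1024 * w ^+ 5).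
  by rewrite expr_div_n exprMn; congr (_ / _); rewrite exprMn; congr (_ * _); lra.
have c5 : c ^+ 5 <= 243.
  apply: (le_trans (y := 3 ^+ 5)); last by lra.
  by apply: lerXn2r; rewrite ?nnegrE.
have c6 : c ^+ 6 <= 729.
  apply: (le_trans (y := 3 ^+ 6)); last by lra.
  by apply: lerXn2r; rewrite ?nnegrE.
have u4 : u ^+ 4 <= 1/16.
  apply: (le_trans (y := (1/2) ^+ 4)); last by lra.
  by apply: lerXn2r; rewrite ?nnegrE //; lra.
have c50 : 0 <= c ^+ 5 by rewrite exprn_ge0.
have c60 : 0 <= c ^+ 6 by rewrite exprn_ge0.
have u40 : 0 <= u ^+ 4 by rewrite exprn_ge0 // ltW.
split.
  rewrite e1 ler_pdivrMr ?mul1r; last by lra.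
  have -> : u ^+ 5 = u ^+ 4 * u by rewrite exprSr.
  apply: (le_trans (y := 243 * (1/16 * u))); last by lra.
  apply: ler_pM => //; first by rewrite mulr_ge0 // ltW.
  by apply: ler_wpM2r => //; rewrite ltW.
have -> : 2 * c / u * (c * u / (4 * w)) ^+ 5 =
   u ^+ 3 / 5 * (10 * (c ^+ 6 * u) / (1024 * w ^+ 5)).
  by rewrite e1; field; rewrite wn un.
apply: ler_piMr; first by rewrite divr_ge0 // exprn_ge0 // ltW.
rewrite ler_pdivrMr ?mul1r; last by lra.
apply: (le_trans (y := 10 * (729 * u))); last by lra.
by rewrite ler_wpM2l // ler_wpM2r // ltW.
Qed.

Lemma last_bound (R : realType) (u : R) (v : nat) : 0 < u -> u <= 1/2 -> (15 <= 3 * v)%N ->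
  (u ^+ 3 / 5) ^+ v <= (2 * u) ^+ 15 * (1/40) ^+ v.
Proof.
move=> u0 u2 hv.
have h1 : (u ^+ 3 / 5) ^+ v = u ^+ 15 * u ^+ (3 * v - 15) * (1/5) ^+ v.
  by rewrite -exprD subnKC // exprM -exprMn mul1r.
have h2 : (2 * u) ^+ 15 * (1/40) ^+ v = u ^+ 15 * (1/2) ^+ (3 * v - 15) * (1/5) ^+ v.
  have -> : (1/40 : R) = (1/2) ^+ 3 * (1/5) by lra.
  rewrite [((1/2) ^+ 3 * _) ^+ v]exprMn -exprM.
  have e : (1/2 : R) ^+ (3 * v) = (1/2) ^+ 15 * (1/2) ^+ (3 * v - 15) by rewrite -exprD subnKC.
  rewrite e.
  set A := (1/2 : R) ^+ (3 * v - 15); set B := (1/5 : R) ^+ v; by field.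
rewrite h1 h2; apply: ler_wpM2r; first by rewrite exprn_ge0 //; lra.
apply: ler_wpM2l; first by rewrite exprn_ge0 // ltW.
by apply: lerXn2r; rewrite ?nnegrE ?(ltW u0) //; lra.
Qed.

Lemma sum_by_card (R : realType) n (f : nat -> R) :
  \sum_(V : {set vtx n}) f #|V| = \sum_(j < (n + n).+1) 'C(n + n, j)%:R * f j.
Proof.
have cT : #|vtx n| = (n + n)%N by rewrite /vtx card_sum card_ord.
rewrite (partition_big (fun V : {set vtx n} => (inord #|V| : 'I_(n + n).+1)) xpredT) //=.
apply: eq_bigr => j _.
have hV : forall V : {set vtx n}, (inord #|V| == j :> 'I_(n + n).+1) = (#|V| == j).
  move=> V; rewrite -val_eqE /= inordK // ltnS -cT; exact: max_card.
rewrite (eq_bigl (fun V => V \in [set V : {set vtx n} | #|V| == j])); last first.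
  by move=> V; rewrite inE hV.
rewrite (eq_bigr (fun _ => f j)); last by move=> V; rewrite inE => /eqP ->.
by rewrite sumr_const card_draws cT mulr_natl.
Qed.

Theorem lemma2p6 (R : realType) (C alpha gamma r : R) (n : nat)
  (mu : {ffun {set edge n} -> R}) :
  1 < C -> 0 < alpha -> alpha < 4^-1 ->
  C * (20 * alpha) `^ (5^-1) < gamma ->
  5 / gamma < r ->
  (0 < n)%N ->
  is_distr mu ->
  spread (C * r / n%:R) mu ->
  1 - (n%:R ^- 14) <=
    \sum_(H : {set edge n} | `[< sparse alpha (gamma * r / n%:R) H >]) mu H.
Proof.
move=> C1 a0 a4 hg hr n0 [mu0 mu1] hsp.
set N : R := n%:R in hsp *.
have N0 : 0 < N by rewrite ltr0n.
have p0 : 0 < (20 * alpha) `^ (5^-1) by apply: powR_gt0; lra.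
have C0 : 0 < C by lra.
have g0 : 0 < gamma by apply: lt_trans hg; rewrite mulr_gt0.
have r0 : 0 < r by apply: lt_trans hr; rewrite divr_gt0.
have b5 : 5 < gamma * r by move: hr; rewrite ltr_pdivrMr // mulrC.
have G5 : 20 * alpha * C ^+ 5 < gamma ^+ 5.
  have := ltrXn2r 5 (ltW (mulr_gt0 C0 p0)) hg; rewrite /= => h.
  have e : ((20 * alpha) `^ (5^-1)) ^+ 5 = 20 * alpha.
    rewrite -powR_mulrn ?powR_ge0 // -powRrM mulVf ?powRr1 //; lra.
  by move: h; rewrite exprMn e mulrC.
set beta := gamma * r.
set q := C * r / N.
have q0 : 0 <= q by rewrite divr_ge0 // ?mulr_ge0 // ltW.
pose kk (v : nat) := (Num.truncn (beta * v%:R)).+1.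
pose P := fun H : {set edge n} => `[< sparse alpha (gamma * r / N) H >].
pose CV := fun V : {set vtx n} => #|V|%:R < 2 * alpha * N.
pose CS := fun (V : {set vtx n}) (S : {set edge n}) =>
  (S \subset induced [set: edge n] V) && (#|S| == kk #|V|).
pose F := fun (H : {set edge n}) (V : {set vtx n}) (S : {set edge n}) =>
  if S \subset H then mu H else 0.
have F0 : forall H V S, 0 <= F H V S by move=> H V S; rewrite /F; case: ifP.
have stepA : forall H, ~~ P H ->
    mu H <= \sum_(V | CV V) \sum_(S | CS V S) F H V S.
  move=> H /asboolPn nsp.
  have [V [hV1 hV2]] : exists V : {set vtx n},
      CV V /\ beta * #|V|%:R < #|induced H V|%:R.
    apply: contrapT => hc; apply: nsp => V hV; rewrite leNgt; apply/negP => hlt.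
    apply: hc; exists V; split => //.
    move: hlt; have -> : gamma * r / N * N = beta by rewrite /beta; field; rewrite gt_eqF.
    done.
  have hk : (kk #|V| <= #|induced H V|)%N.
    have be0 : 0 <= beta * #|V|%:R by rewrite mulr_ge0 // ltW // (lt_trans _ b5).
    by rewrite /kk truncn_lt_nat.
  have [S [hS1 hS2]] := @exists_sub _ _ _ hk.
  have hSH : S \subset H.
    by apply: (fintype.subset_trans hS1); apply/fintype.subsetP => e; rewrite inE => /andP [].
  have hCS : CS V S.
    rewrite /CS hS2 eqxx andbT; apply: (fintype.subset_trans hS1).
    by apply/fintype.subsetP => e; rewrite !inE => /andP [_ ->].
  rewrite (bigD1 V) //= (bigD1 S) //= {1}/F hSH.
  rewrite -addrA lerDl addr_ge0 // sumr_ge0 // => V' _; exact: sumr_ge0.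
have stepB : \sum_(H | ~~ P H) mu H <=
    \sum_(V | CV V) \sum_(S | CS V S) prob mu (fun H => S \subset H).
  apply: (le_trans (ler_sum _ stepA)).
  apply: (le_trans (y := \sum_H \sum_(V | CV V) \sum_(S | CS V S) F H V S)).
    rewrite [X in _ <= X](bigID (fun H => ~~ P H)) /= lerDl.
    by apply: sumr_ge0 => H _; apply: sumr_ge0 => V _; apply: sumr_ge0.
  rewrite exchange_big /=; apply: ler_sum => V _.
  rewrite exchange_big /=; apply: ler_sum => S _.
  by rewrite /prob [X in _ <= X]big_mkcond /=.
have N1 : 1 <= N by rewrite ler1n.
pose b := fun v : nat => expR 1 * (v%:R / N) / (4 * (gamma / C)).
pose f := fun v : nat =>
  if (20 < v)%N && (v%:R < 2 * alpha * N) then b v ^+ (5 * v) else 0.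
have w0 : 0 < gamma / C by rewrite divr_gt0.
have e3 := @e_le3 R.
have e0 : 0 <= expR 1 :> R by exact: expR_ge0.
have b0 : forall v, 0 <= b v.
  move=> v; rewrite /b; apply: divr_ge0.
    by apply: mulr_ge0 => //; apply: divr_ge0 => //; exact: ltW.
  by apply: mulr_ge0; [lra | exact: ltW].
have f0 : forall v, 0 <= f v.
  by move=> v; rewrite /f; case: ifP => // _; rewrite exprn_ge0.
have nb : forall v : nat, (20 < v)%N -> v%:R < 2 * alpha * N ->
   [/\ b v <= 1, (2 * expR 1 / (v%:R / N)) * b v ^+ 5 <= (v%:R / N) ^+ 3 / 5,
       0 < v%:R / N & v%:R / N <= 1/2].
  move=> v hv hV.
  have v0 : 0 < v%:R :> R by rewrite ltr0n (leq_trans _ hv).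
  have u0 : 0 < v%:R / N by rewrite divr_gt0.
  have hu : v%:R / N * N = v%:R by field; rewrite gt_eqF.
  have u2 : v%:R / N <= 1/2 by nra.
  have hw : 10 * (v%:R / N) <= (gamma / C) ^+ 5.
    rewrite expr_div_n.
    have : 20 * alpha <= gamma ^+ 5 / C ^+ 5.
      by rewrite ler_pdivlMr ?exprn_gt0 // ltW.
    suff : 10 * (v%:R / N) <= 20 * alpha by lra.
    nra.
  have [h1 h2] := @num1 R _ _ _ e0 e3 u0 u2 w0 hw.
  split => //.
  by move: h1; rewrite -[X in _ <= X](expr1n _ 5) ler_pXn2r // ?nnegrE ?b0.
have stepC : forall V, CV V ->
    \sum_(S | CS V S) prob mu (fun H => S \subset H) <= f #|V|.
  move=> V hV.
  apply: (le_trans (y := \sum_(S | CS V S) q ^+ (kk #|V|))).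
    apply: ler_sum => S hS; case/andP: hS => _ /eqP <-; exact: hsp.
  rewrite (eq_bigl (fun S => S \in [set X : {set edge n} | (X \subset induced [set: edge n] V) & (#|X| == kk #|V|)])); last first.
    by move=> S; rewrite inE.
  rewrite sumr_const cards_draws -mulr_natl.
  have hV' : #|V|%:R < 2 * alpha * N by [].
  rewrite /f hV' andbT.
  apply: (@perV R q (b #|V|) beta) => //.
  - exact: card_EV.
  - exact: truncnS_gt.
  - move=> hv.
    have [_ _ u0 _] := nb _ hv hV'.
    set v := #|V|; set m := #|induced [set: edge n] V|.
    have v0 : 0 < v%:R :> R by rewrite ltr0n (leq_trans _ hv).
    have bv0 : 0 < beta * v%:R by rewrite mulr_gt0 // (lt_trans _ b5).
    have hk := truncnS_gt (beta * v%:R).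
    have m0 : 0 <= m%:R :> R by [].
    have hm : 4 * m%:R <= v%:R ^+ 2 :> R.
      by rewrite -natrX -(natrM R 4) ler_nat card_EV.
    apply: (le_trans (y := expR 1 * m%:R * q / (beta * v%:R))).
      have hnn : 0 <= expR 1 * m%:R * q by apply: mulr_ge0 => //; apply: mulr_ge0.
      rewrite ler_wpM2l // lef_pV2 ?posrE ?(lt_trans bv0 hk) //; exact: ltW.
    have -> : expR 1 * m%:R * q / (beta * v%:R) =
      (expR 1 * C / (N * gamma)) * (m%:R / v%:R).
      by rewrite /q /beta; field; rewrite !gt_eqF.
    have -> : b v = (expR 1 * C / (N * gamma)) * (v%:R / 4).
      by rewrite /b; field; rewrite !gt_eqF.
    have hc : 0 <= expR 1 * C / (N * gamma).
      apply: divr_ge0; first by apply: mulr_ge0 => //; exact: ltW.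
      by apply: mulr_ge0; exact: ltW.
    rewrite ler_wpM2l // ler_pdivrMr //; rewrite expr2 in hm; nra.
  - by move=> hv; have [] := nb _ hv hV'.
have stepD : forall j : nat, 'C(n + n, j)%:R * f j <= N ^- 15 / 3.
  move=> j; rewrite /f; case: ifP => [/andP [hv hV]|_]; last first.
    by rewrite mulr0 divr_ge0 // invr_ge0 exprn_ge0 // ltW.
  have [h1 h2 u0 u2] := nb _ hv hV.
  have j0 : (0 < j)%N by apply: leq_trans hv.
  have jr0 : 0 < j%:R :> R by rewrite ltr0n.
  apply: (le_trans (y := (expR 1 * (n + n)%:R / j%:R) ^+ j * (b j ^+ 5) ^+ j)).
    by rewrite -exprM mulnC ler_wpM2r ?exprn_ge0 ?binom_bound.
  rewrite -exprMn.
  have -> : expR 1 * (n + n)%:R / j%:R = 2 * expR 1 / (j%:R / N).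
    by rewrite natrD -/N; field; rewrite !gt_eqF.
  apply: (le_trans (y := ((j%:R / N) ^+ 3 / 5) ^+ j)).
    apply: lerXn2r => //; rewrite nnegrE.
      apply: mulr_ge0; last exact: exprn_ge0.
      by apply: divr_ge0; [apply: mulr_ge0 | exact: ltW].
    by apply: divr_ge0 => //; apply: exprn_ge0; exact: ltW.
  have h15 : (15 <= 3 * j)%N by apply: leq_trans (_ : 15 <= 3 * 21)%N _; rewrite ?leq_mul2l.
  apply: (le_trans (@last_bound R _ _ u0 u2 h15)).
  have -> : (2 * (j%:R / N)) ^+ 15 * (1 / 40) ^+ j =
      N ^- 15 * ((2 * j)%:R ^+ 15 / 40 ^+ j).
    rewrite mulrA expr_div_n mul1r exprVn natrM.
    set A := (2 * j%:R) ^+ 15; set B := N ^+ 15; set D := (40 : R) ^+ j.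
    by rewrite mulrCA mulrA.
  rewrite ler_pM2l ?invr_gt0 ?exprn_gt0 //.
  have := @poly_exp R j hv; have : 0 < (40 : R) ^+ j by rewrite exprn_gt0.
  set A := (2 * j)%:R ^+ 15; set D := (40 : R) ^+ j.
  move=> h40 hp; rewrite ler_pdivrMr //; lra.
have stepE : \sum_(V | CV V) \sum_(S | CS V S) prob mu (fun H => S \subset H) <= N ^- 14.
  apply: (le_trans (ler_sum _ stepC)).
  apply: (le_trans (y := \sum_(V : {set vtx n}) f #|V|)).
    by rewrite [X in _ <= X](bigID CV) /= lerDl sumr_ge0.
  rewrite sum_by_card.
  apply: (le_trans (ler_sum _ (fun (j : 'I_(n + n).+1) _ => stepD j))).
  rewrite sumr_const card_ord -(mulr_natr (N ^- 15 / 3)) -[(n + n).+1]addn1 !natrD -/N.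
  have -> : N ^- 14 = N ^- 15 * N.
    by field; rewrite gt_eqF.
  have h15 : 0 < N ^- 15 by rewrite invr_gt0 exprn_gt0.
  rewrite -mulrA ler_pM2l //; lra.
have := mu1; rewrite (bigID P) /= => hsum.
have := le_trans stepB stepE; lra.
Qed.
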